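(* Fix $\delta>0$ and let $\Omega=\{(x,y)\in\mathbb{R}^2 : x>-1\}$. Set $\alpha(x,y)=\frac{y^2+\delta^2}{(1+x)^2}$, $\beta(x,y)=\frac{-2y}{1+x}$, and $\lambda=a+ib$ with $a(x,y)=\frac{y}{1+x}$, $b(x,y)=\frac{\delta}{1+x}$ (so $\alpha=a^2+b^2$, $\beta=-2a$). Let $(u,v)\in C^1(\Omega,\mathbb{R}^2)$ be a solution of the real first-order system $$u_x-\alpha\,v_y=0,\qquad v_x+u_y-\beta\,v_y=0.$$ Define the complex-valued function $w:=u+v\lambda=(u+av)+i\,bv$. Then $w$ satisfies the transport equation $$w_x+\lambda\,w_y=0.$$ Conversely, if $w=p+iq$ satisfies $w_x+\lambda\,w_y=0$, then $u=p-(a/b)\,q$ and $v=q/b$ satisfy the system $u_x-\alpha v_y=0$, $v_x+u_y-\beta v_y=0$.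
   Context: The spectral parameter $\lambda=\frac{y+i\delta}{1+x}$ is the root $\lambda=\frac{-\beta+i\sqrt{4\alpha-\beta^2}}{2}$ associated with the principal symbol of the system; it satisfies the conservative Burgers equation $\lambda_x+\lambda\lambda_y=0$ on $\Omega$ (this is used in the proof). The system is elliptic on all of $\Omega$ since $4\alpha-\beta^2=4\delta^2/(1+x)^2>0$. *)

(* Defs.v *)
From Stdlib Require Import Reals.
From Coquelicot Require Export Coquelicot.
Open Scope R_scope.

Definition is_pdx {V : NormedModule R_AbsRing} (f : R -> R -> V) (x y : R) (l : V) : Prop :=
  is_derive (fun t => f t y) x l.
Definition is_pdy {V : NormedModule R_AbsRing} (f : R -> R -> V) (x y : R) (l : V) : Prop :=
  is_derive (fun t => f x t) y l.

Definition Omega (x y : R) : Prop := -1 < x.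

Definition C1_Omega (f : R -> R -> R) : Prop :=
  forall x y, Omega x y ->
    ex_derive (fun t => f t y) x /\ ex_derive (fun t => f x t) y /\
    continuous (fun p : R * R => Derive (fun t => f t (snd p)) (fst p)) (x, y) /\
    continuous (fun p : R * R => Derive (fun t => f (fst p) t) (snd p)) (x, y).

Definition alpha (delta x y : R) : R := (y ^ 2 + delta ^ 2) / (1 + x) ^ 2.
Definition beta (x y : R) : R := - 2 * y / (1 + x).
Definition acoef (x y : R) : R := y / (1 + x).
Definition bcoef (delta x y : R) : R := delta / (1 + x).
Definition lambda (delta x y : R) : C := (acoef x y, bcoef delta x y).

Definition solves_system (delta : R) (u v : R -> R -> R) : Prop :=
  forall x y, Omega x y ->
    exists ux uy vx vy : R,
      is_pdx u x y ux /\ is_pdy u x y uy /\ is_pdx v x y vx /\ is_pdy v x y vy /\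
      ux - alpha delta x y * vy = 0 /\
      vx + uy - beta x y * vy = 0.

Definition solves_transport (delta : R) (w : R -> R -> C) : Prop :=
  forall x y, Omega x y ->
    exists wx wy : C,
      @is_pdx C_R_NormedModule w x y wx /\ @is_pdy C_R_NormedModule w x y wy /\
      Cplus wx (Cmult (lambda delta x y) wy) = RtoC 0.

(* Main.v *)
Require Import Defs.
From Stdlib Require Import Reals Lra.
From Coquelicot Require Import Coquelicot.
Open Scope R_scope.

Lemma dmul (f g : R -> R) x df dg :
  is_derive f x df -> is_derive g x dg ->
  is_derive (fun t => f t * g t) x (df * g x + f x * dg).
Proof. intros Hf Hg. apply (is_derive_mult f g x df dg Hf Hg). intros; apply Rmult_comm. Qed.

Lemma dplus (f g : R -> R) x df dg :
  is_derive f x df -> is_derive g x dg ->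
  is_derive (fun t => f t + g t) x (df + dg).
Proof. intros Hf Hg. apply (is_derive_plus f g x df dg Hf Hg). Qed.

Lemma dfst (f : R -> C) x (l : C) :
  @is_derive R_AbsRing C_R_NormedModule f x l -> is_derive (fun t => fst (f t)) x (fst l).
Proof.
  intros H. unfold is_derive in *.
  eapply filterdiff_ext_lin.
  - apply (filterdiff_comp' f (fun p : C_R_NormedModule => fst p) x _ (fun p : C_R_NormedModule => fst p) H).
    apply filterdiff_linear. apply (@is_linear_fst R_AbsRing R_NormedModule R_NormedModule).
  - intros y. simpl. reflexivity.
Qed.

Lemma dsnd (f : R -> C) x (l : C) :
  @is_derive R_AbsRing C_R_NormedModule f x l -> is_derive (fun t => snd (f t)) x (snd l).
Proof.
  intros H. unfold is_derive in *.
  eapply filterdiff_ext_lin.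
  - apply (filterdiff_comp' f (fun p : C_R_NormedModule => snd p) x _ (fun p : C_R_NormedModule => snd p) H).
    apply filterdiff_linear. apply (@is_linear_snd R_AbsRing R_NormedModule R_NormedModule).
  - intros y. simpl. reflexivity.
Qed.

Lemma dpair (p q : R -> R) x dp dq :
  is_derive p x dp -> is_derive q x dq ->
  @is_derive R_AbsRing C_R_NormedModule (fun t => (p t, q t) : C) x ((dp, dq) : C).
Proof.
  intros Hp Hq.
  assert (H := @is_derive_plus R_AbsRing C_R_NormedModule
     (fun t => scal (p t) ((1,0):C)) (fun t => scal (q t) ((0,1):C)) x _ _
     (@is_derive_scal_l R_AbsRing C_R_NormedModule p x dp ((1,0):C) Hp)
     (@is_derive_scal_l R_AbsRing C_R_NormedModule q x dq ((0,1):C) Hq)).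
  replace ((dp,dq):C) with (plus (scal dp ((1,0):C)) (scal dq ((0,1):C)) : C_R_NormedModule).
  - eapply is_derive_ext; [|exact H]. intros t. simpl.
    unfold prod_plus, prod_scal; simpl. unfold plus, scal; simpl.
    unfold mult; simpl. apply injective_projections; simpl; unfold plus, mult; simpl; unfold scal; simpl; unfold mult; simpl; ring.
  - simpl. unfold prod_plus, prod_scal; simpl. unfold plus, scal; simpl.
    unfold mult; simpl. apply injective_projections; simpl; unfold plus, mult; simpl; unfold scal; simpl; unfold mult; simpl; ring.
Qed.
Lemma dminus (f g : R -> R) x df dg :
  is_derive f x df -> is_derive g x dg ->
  is_derive (fun t => f t - g t) x (df - dg).
Proof. intros Hf Hg. apply (is_derive_minus f g x df dg Hf Hg). Qed.

Lemma da_x y x : 1 + x <> 0 -> is_derive (fun t => acoef t y) x (- y / (1+x)^2).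
Proof. intros H. unfold acoef. auto_derive; [auto| field; auto]. Qed.
Lemma da_y y x : 1 + x <> 0 -> is_derive (fun t => acoef x t) y (1 / (1+x)).
Proof. intros H. unfold acoef. auto_derive; [auto| field; auto]. Qed.
Lemma db_x d y x : 1 + x <> 0 -> is_derive (fun t => bcoef d t y) x (- d / (1+x)^2).
Proof. intros H. unfold bcoef. auto_derive; [auto| field; auto]. Qed.
Lemma db_y d y x : 1 + x <> 0 -> is_derive (fun t => bcoef d x t) y 0.
Proof. intros H. unfold bcoef. auto_derive; [auto| field; auto]. Qed.
Lemma dc_x d y x : 1 + x <> 0 -> d <> 0 -> is_derive (fun t => acoef t y / bcoef d t y) x 0.
Proof. intros H Hd. unfold acoef, bcoef. auto_derive.
  all: try (repeat split; auto; unfold Rdiv; apply Rmult_integral_contrapositive; split; auto;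
    apply Rinv_neq_0_compat; auto).
  all: field; auto. Qed.
Lemma dc_y d y x : 1 + x <> 0 -> d <> 0 -> is_derive (fun t => acoef x t / bcoef d x t) y (1/d).
Proof. intros H Hd. unfold acoef, bcoef. auto_derive.
  all: try (repeat split; auto; unfold Rdiv; apply Rmult_integral_contrapositive; split; auto;
    apply Rinv_neq_0_compat; auto).
  all: field; auto. Qed.
Lemma dib_x d y x : 1 + x <> 0 -> d <> 0 -> is_derive (fun t => / bcoef d t y) x (1/d).
Proof. intros H Hd. unfold bcoef. auto_derive.
  all: try (repeat split; auto; unfold Rdiv; apply Rmult_integral_contrapositive; split; auto;
    apply Rinv_neq_0_compat; auto).
  all: field; auto. Qed.
Lemma dib_y d y x : 1 + x <> 0 -> d <> 0 -> is_derive (fun t => / bcoef d x t) y 0.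
Proof. intros H Hd. unfold bcoef. auto_derive.
  all: try (repeat split; auto; unfold Rdiv; apply Rmult_integral_contrapositive; split; auto;
    apply Rinv_neq_0_compat; auto).
  all: field; auto. Qed.

Theorem proposition3p2 (delta : R) (hdelta : 0 < delta) :
  (forall u v : R -> R -> R,
      C1_Omega u -> C1_Omega v -> solves_system delta u v ->
      solves_transport delta
        (fun x y => Cplus (RtoC (u x y)) (Cmult (RtoC (v x y)) (lambda delta x y))))
  /\
  (forall w : R -> R -> C,
      C1_Omega (fun x y => fst (w x y)) -> C1_Omega (fun x y => snd (w x y)) ->
      solves_transport delta w ->
      solves_system delta
        (fun x y => fst (w x y) - acoef x y / bcoef delta x y * snd (w x y))
        (fun x y => snd (w x y) / bcoef delta x y)).
Proof.
  split.
  - intros u v _ _ Hs x y Hxy.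
    assert (HX : 1 + x <> 0) by (unfold Omega in Hxy; lra).
    destruct (Hs x y Hxy) as (ux & uy & vx & vy & Hux & Huy & Hvx & Hvy & E1 & E2).
    unfold is_pdx, is_pdy in *.
    assert (Fx := dplus _ _ x _ _ Hux (dmul _ _ x _ _ Hvx (da_x y x HX))).
    assert (Gx := dmul _ _ x _ _ Hvx (db_x delta y x HX)).
    assert (Fy := dplus _ _ y _ _ Huy (dmul _ _ y _ _ Hvy (da_y y x HX))).
    assert (Gy := dmul _ _ y _ _ Hvy (db_y delta y x HX)).
    eexists; eexists; split; [|split].
    + eapply is_derive_ext; [|exact (dpair _ _ x _ _ Fx Gx)].
      intros t. simpl. unfold Cplus, Cmult, RtoC, lambda. simpl.
      apply injective_projections; simpl; ring.
    + eapply is_derive_ext; [|exact (dpair _ _ y _ _ Fy Gy)].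
      intros t. simpl. unfold Cplus, Cmult, RtoC, lambda. simpl.
      apply injective_projections; simpl; ring.
    + unfold Cplus, Cmult, RtoC, lambda. apply injective_projections; simpl.
      * replace ux with (alpha delta x y * vy) by lra.
        replace vx with (beta x y * vy - uy) by lra.
        unfold alpha, beta, acoef, bcoef. field. auto.
      * replace ux with (alpha delta x y * vy) by lra.
        replace vx with (beta x y * vy - uy) by lra.
        unfold alpha, beta, acoef, bcoef. field. auto.
  - intros w _ _ Ht x y Hxy.
    assert (HX : 1 + x <> 0) by (unfold Omega in Hxy; lra).
    assert (Hd : delta <> 0) by lra.
    destruct (Ht x y Hxy) as (wx & wy & Hwx & Hwy & E).
    unfold is_pdx, is_pdy in *.
    assert (Px := dfst _ _ _ Hwx). assert (Qx := dsnd _ _ _ Hwx).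
    assert (Py := dfst _ _ _ Hwy). assert (Qy := dsnd _ _ _ Hwy).
    destruct wx as [px qx]; destruct wy as [py qy]; simpl in *.
    unfold Cplus, Cmult, RtoC, lambda in E. simpl in E.
    injection E; intros E2 E1.
    eexists; eexists; eexists; eexists.
    split; [|split; [|split; [|split; [|split]]]].
    + apply (dminus _ _ x _ _ Px (dmul (fun t => acoef t y / bcoef delta t y) _ x _ _ (dc_x delta y x HX Hd) Qx)).
    + apply (dminus _ _ y _ _ Py (dmul (fun t => acoef x t / bcoef delta x t) _ y _ _ (dc_y delta y x HX Hd) Qy)).
    + apply (dmul _ (fun t => / bcoef delta t y) x _ _ Qx (dib_x delta y x HX Hd)).
    + apply (dmul _ (fun t => / bcoef delta x t) y _ _ Qy (dib_y delta y x HX Hd)).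
    + replace px with (- (acoef x y * py - bcoef delta x y * qy)) by lra.
      replace qx with (- (acoef x y * qy + bcoef delta x y * py)) by lra.
      unfold alpha, beta, acoef, bcoef. field. auto.
    + replace px with (- (acoef x y * py - bcoef delta x y * qy)) by lra.
      replace qx with (- (acoef x y * qy + bcoef delta x y * py)) by lra.
      unfold alpha, beta, acoef, bcoef. field. auto.
Qed.
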